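(* Let $\{w^k\}$ be generated by Algorithm 2 (running infinitely). Each accumulation point $\bar w$ of $\{w^k\}$ is feasible for (P) (i.e., $G(\bar w)\in C$ and $\bar w\in D$) provided one of the following holds: (a) $\{\rho_k\}$ is bounded; or (b) there is $B\in\mathbb R$ with $\mathcal L_{\rho_k}(w^{k+1},u^k)\le B$ for all $k\in\mathbb N$.
   Context: Standing setting: $\mathbb W,\mathbb Y$ Euclidean spaces; (P) is $\min f(w)$ s.t. $G(w)\in C$, $w\in D$, with $f\colon\mathbb W\to\mathbb R$, $G\colon\mathbb W\to\mathbb Y$ continuously differentiable, $C\subset\mathbb Y$ nonempty closed convex, $D\subset\mathbb W$ nonempty closed. $P_C$ is the Euclidean projection onto $C$, $d_C(y)=\|y-P_C(y)\|$; $\mathcal N^{\lim}_D(\bar w):=\limsup_{w\to\bar w}\operatorname{cone}(w-\Pi_D(w))$ for $\bar w\in D$ ($\Pi_D$ multivalued projection, outer set limit), $\varnothing$ for $\bar w\notin D$. Augmented Lagrangian $\mathcal L_\rho(w,\lambda):=f(w)+\frac\rho2 d_C^2(G(w)+\lambda/\rho)$; $V_\rho(w,u):=\|G(w)-P_C(G(w)+u/\rho)\|$. Algorithm 2: data $\rho_0>0$, $\beta>1$, $\eta\in(0,1)$, $w^0\in D$, a nonempty bounded set $U\subset\mathbb Y$. For $k=0,1,\dots$: choose $u^k\in U$; compute $w^{k+1}$ and $\varepsilon^{k+1}\in\mathbb W$ with $\varepsilon^{k+1}\in\nabla_w\mathcal L_{\rho_k}(w^{k+1},u^k)+\mathcal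 N^{\lim}_D(w^{k+1})$ (so $w^{k+1}\in D$); set $\lambda^{k+1}:=\rho_k[G(w^{k+1})+u^k/\rho_k-P_C(G(w^{k+1})+u^k/\rho_k)]$; if $k=0$ or $V_{\rho_k}(w^{k+1},u^k)\le\eta V_{\rho_{k-1}}(w^k,u^{k-1})$ set $\rho_{k+1}:=\rho_k$, else $\rho_{k+1}:=\beta\rho_k$. *)

(* Defs.v *)
(* W = 'rV[R]_n, Y = 'rV[R]_m with the Euclidean
   inner product and norm defined below. *)
From HB Require Import structures.
From mathcomp Require Import all_boot all_order all_algebra.
From mathcomp Require Import all_classical all_reals all_analysis.
Set Implicit Arguments. Unset Strict Implicit. Unset Printing Implicit Defensive.
Import Order.TTheory GRing.Theory Num.Theory.
Import numFieldNormedType.Exports.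
Local Open Scope classical_set_scope.
Local Open Scope ring_scope.

Section Defs.
Variable R : realType.

Definition inner (k : nat) (x y : 'rV[R]_k) : R := \sum_(i < k) x 0 i * y 0 i.
Definition enorm (k : nat) (x : 'rV[R]_k) : R := Num.sqrt (inner x x).

Definition eclosed (k : nat) (A : set 'rV[R]_k) : Prop :=
  forall x, (forall e : R, 0 < e -> exists2 y, A y & enorm (x - y) < e) -> A x.
Definition econvex (k : nat) (A : set 'rV[R]_k) : Prop :=
  forall x y (t : R), A x -> A y -> 0 <= t <= 1 -> A (t *: x + (1 - t) *: y).
Definition ebounded (k : nat) (A : set 'rV[R]_k) : Prop :=
  exists M : R, forall y, A y -> enorm y <= M.
Definition seq_conv (k : nat) (x : nat -> 'rV[R]_k) (l : 'rV[R]_k) : Prop :=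
  forall e : R, 0 < e -> exists N, forall j, (N <= j)%N -> enorm (x j - l) < e.
Definition accum_point (k : nat) (x : nat -> 'rV[R]_k) (l : 'rV[R]_k) : Prop :=
  forall e : R, 0 < e -> forall N, exists2 j, (N <= j)%N & enorm (x j - l) < e.

Definition PiD (k : nat) (D : set 'rV[R]_k) (w : 'rV[R]_k) : set 'rV[R]_k :=
  [set p | D p /\ forall d, D d -> enorm (w - p) <= enorm (w - d)].

(* Euclidean projection P_C onto C (a chosen nearest point; unique when C is
   nonempty closed convex) and distance d_C *)
Definition projC (k : nat) (C : set 'rV[R]_k) (y : 'rV[R]_k) : 'rV[R]_k :=
  xget y (PiD C y).
Definition distC (k : nat) (C : set 'rV[R]_k) (y : 'rV[R]_k) : R :=
  enorm (y - projC C y).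

Definition cone (k : nat) (A : set 'rV[R]_k) : set 'rV[R]_k :=
  [set v | exists t : R, exists2 a, A a & 0 <= t /\ v = t *: a].

(* limiting normal cone: outer limit of cone(w - Pi_D(w)) as w -> wbar *)
Definition Nlim (k : nat) (D : set 'rV[R]_k) (wbar : 'rV[R]_k) : set 'rV[R]_k :=
  [set v | D wbar /\
     exists (ws vs : nat -> 'rV[R]_k), [/\ seq_conv ws wbar, seq_conv vs v &
       forall j, cone [set ws j - p | p in PiD D (ws j)] (vs j)]].

Definition is_grad (k : nat) (phi : 'rV[R]_k -> R) (w g : 'rV[R]_k) : Prop :=
  differentiable phi w /\ forall h, 'd phi w h = inner g h.

Definition AugL (n m : nat) (f : 'rV[R]_n -> R) (G : 'rV[R]_n -> 'rV[R]_m)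
  (C : set 'rV[R]_m) (rho : R) (w : 'rV[R]_n) (lam : 'rV[R]_m) : R :=
  f w + rho / 2 * distC C (G w + rho^-1 *: lam) ^+ 2.
Definition Vrho (n m : nat) (G : 'rV[R]_n -> 'rV[R]_m) (C : set 'rV[R]_m)
  (rho : R) (w : 'rV[R]_n) (u : 'rV[R]_m) : R :=
  enorm (G w - projC C (G w + rho^-1 *: u)).

Definition C1 (n k : nat) (F : 'rV[R]_n -> 'rV[R]_k) : Prop :=
  (forall w, differentiable F w) /\ forall h, continuous (fun w => 'd F w h).
Definition C1r (n : nat) (F : 'rV[R]_n -> R) : Prop :=
  (forall w, differentiable F w) /\ forall h, continuous (fun w => 'd F w h).

Definition algorithm2 (n m : nat) (f : 'rV[R]_n -> R) (G : 'rV[R]_n -> 'rV[R]_m)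
  (C : set 'rV[R]_m) (D : set 'rV[R]_n) (rho0 beta eta : R) (U : set 'rV[R]_m)
  (w eps : nat -> 'rV[R]_n) (u : nat -> 'rV[R]_m) (rho : nat -> R) : Prop :=
  [/\ rho 0%N = rho0, D (w 0%N),
      forall k, U (u k),
      forall k, exists2 g, is_grad (fun x => AugL f G C (rho k) x (u k)) (w k.+1) g
                        & Nlim D (w k.+1) (eps k.+1 - g) &
      forall k, rho k.+1 =
        (if (k == 0)%N || (Vrho G C (rho k) (w k.+1) (u k)
                            <= eta * Vrho G C (rho k.-1) (w k) (u k.-1))
         then rho k else beta * rho k)].
End Defs.

(* Main.v *)
Require Import Defs.
From HB Require Import structures.
From mathcomp Require Import all_boot all_order all_algebra.
From mathcomp Require Import all_classical all_reals all_analysis.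
From mathcomp Require Import ring lra zify.
Import Order.TTheory GRing.Theory Num.Theory Num.Def.
Import numFieldNormedType.Exports.
Local Open Scope classical_set_scope.
Local Open Scope ring_scope.

Section Aux.
Variable R : realType.

Lemma inner_ge0 k (x : 'rV[R]_k) : 0 <= inner x x.
Proof. by apply: sumr_ge0 => i _; rewrite -expr2 sqr_ge0. Qed.

Lemma enorm_ge0 k (x : 'rV[R]_k) : 0 <= enorm x.
Proof. exact: sqrtr_ge0. Qed.

Lemma enormN k (x : 'rV[R]_k) : enorm (- x) = enorm x.
Proof.
rewrite /enorm /inner; congr Num.sqrt; apply: eq_bigr => i _.
by rewrite mxE mulrNN.
Qed.

Lemma enormB k (x y : 'rV[R]_k) : enorm (x - y) = enorm (y - x).
Proof. by rewrite -enormN opprB. Qed.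

Lemma coord_le k (x : 'rV[R]_k) i : `|x 0 i| <= `|x|.
Proof.
rewrite [leRHS]/normr /= mx_normrE; apply/bigmax_geP; right => /=.
by exists (0, i).
Qed.

Lemma norm_le_enorm k (x : 'rV[R]_k) : `|x| <= enorm x.
Proof.
rewrite [leLHS]/normr /= mx_normrE; apply/bigmax_leP; split => /=.
  exact: enorm_ge0.
move=> [a i] _ /=; rewrite (ord1 a) -sqrtr_sqr /enorm ler_sqrt ?inner_ge0 //.
rewrite /inner (bigD1 i) //= expr2 lerDl.
by apply: sumr_ge0 => j _; rewrite -expr2 sqr_ge0.
Qed.

Lemma enorm_le k (x : 'rV[R]_k) : enorm x <= k.+1%:R * `|x|.
Proof.
have nx : 0 <= `|x| by [].
rewrite -[k.+1%:R * _]ger0_norm ?mulr_ge0 // -sqrtr_sqr /enorm ler_sqrt ?sqr_ge0 //.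
apply: (@le_trans _ _ (\sum_(i < k) `|x| ^+ 2)).
  apply: ler_sum => i _; rewrite -expr2 -real_normK ?num_real //.
  by rewrite lerXn2r ?nnegrE // coord_le.
rewrite sumr_const card_ord -mulr_natl -[k.+1]addn1 natrD.
have k0 : 0 <= k%:R :> R by [].
move: nx; set t := `|x|; set q := k%:R => nx; nra.
Qed.

Lemma eclosed_closed k (A : set 'rV[R]_k) : eclosed A -> closed A.
Proof.
move=> eA x clx; apply: eA => e e0.
have k0 : 0 < k.+1%:R :> R by [].
have [y [Ay bxy]] := clx (ball x (e / k.+1%:R)) (nbhsx_ballx _ _ (divr_gt0 e0 k0)).
exists y => //; move: bxy; rewrite -ball_normE /ball_ /= => bxy.
have h1 := @enorm_le k (x - y).
have h2 : k.+1%:R * `|x - y| < e by rewrite mulrC -ltr_pdivlMr.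
exact: le_lt_trans h1 h2.
Qed.

Lemma h_cont k (y : 'rV[R]_k) :
  continuous (fun c : 'rV[R]_k => inner (y - c) (y - c)).
Proof.
rewrite /inner.
apply: (@continuous_big _ _ +%R 0 xpredT add_continuous).
move=> i _ c.
have hc : continuous (fun c : 'rV[R]_k => (y - c) 0 i).
  move=> c'.
  have h1 : {for c', continuous (fun c : 'rV[R]_k => y - c)}.
    by apply: continuousB; [exact: cst_continuous | exact: cvg_id].
  exact: (continuous_comp h1 (@coord_continuous _ 1 k 0 i (y - c'))).
exact: (continuousM (hc c) (hc c)).
Qed.

Lemma projC_in k (C : set 'rV[R]_k) y : C !=set0 -> eclosed C -> C (projC C y).
Proof.
move=> [c0 Cc0] eC.
suff [p Pp] : exists p, PiD C y p by rewrite /projC; have [] := @xgetPex _ y (PiD C y) (ex_intro _ p Pp).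
pose h := fun c : 'rV[R]_k => inner (y - c) (y - c).
have hcont : continuous h by exact: h_cont.
pose r0 := h c0.
pose A := C `&` [set c | h c <= r0].
have A0 : A !=set0 by exists c0; split => //; rewrite /= lexx.
have cA : compact A.
  apply: bounded_closed_compact.
    exists (Num.sqrt r0 + `|y|); split; first exact: num_real.
    move=> M HM a [Ca ha].
    rewrite /=; apply/ltW/(le_lt_trans _ HM).
    have -> : a = y - (y - a) by rewrite opprB addrC subrK.
    apply: le_trans (ler_normB _ _) _; rewrite addrC lerD2r.
    have h1 := @norm_le_enorm k (y - a).
    apply: le_trans h1 _.
    by rewrite /enorm ler_sqrt // /r0; exact: inner_ge0.
  apply: closedI; first exact: eclosed_closed.
  apply: (preimage_closed (f := h) (D := [set x | x <= r0])); last exact: closed_le.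
  by move=> z _; exact: hcont.
have [p pA pmin] := EVT_min_rV A0 cA (@continuous_subspaceT _ _ A h hcont).
rewrite inE in pA; case: pA => Cp hp.
exists p; split => // d Cd.
rewrite /enorm ler_sqrt; last exact: inner_ge0.
case: (leP (h d) r0) => hd.
  by apply: pmin; rewrite inE.
by apply: le_trans hp (ltW hd).
Qed.

Lemma cont_eps (V W : normedModType R) (F : V -> W) x :
  {for x, continuous F} ->
  forall e, 0 < e -> exists2 d, 0 < d & forall t, `|x - t| < d -> `|F x - F t| < e.
Proof.
move=> cF e e0.
have H0 := (cvgrPdist_lt _ _).1 cF e e0.
have [d d0 H] := (nbhs_normP _ _).1 (H0 _).
by exists d => // t xt; apply: H.
Qed.

Lemma bernoulli (q : R) (j : nat) : 1 < q -> 1 + j%:R * (q - 1) <= q ^+ j.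
Proof.
move=> q1; elim: j => [|j IH]; first by rewrite mul0r addr0 expr0.
rewrite exprS -addn1 natrD.
have j0 : 0 <= j%:R :> R by [].
have h1 : q * (1 + j%:R * (q - 1)) <= q * q ^+ j.
  by apply: ler_wpM2l => //; lra.
have h2 : 0 <= j%:R * ((q - 1) * (q - 1)) by apply: mulr_ge0 => //; nra.
nra.
Qed.

Lemma grow (q c M : R) : 1 < q -> 0 < c -> exists j : nat, M < c * q ^+ j.
Proof.
move=> q1 c0.
have t0 : 0 < c * (q - 1) by apply: mulr_gt0 => //; rewrite subr_gt0.
have a0 : 0 <= `|M| / (c * (q - 1)) by apply: divr_ge0 => //; exact: ltW.
have hj := archi_boundP a0.
set j := Num.Def.archi_bound _ in hj.
exists j.
have hb := bernoulli q j q1.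
rewrite ltr_pdivrMr // in hj.
have hM : M <= `|M| by exact: ler_norm.
have j0 : 0 <= j%:R :> R by [].
nra.
Qed.

Lemma closure_step n m (G : 'rV[R]_n -> 'rV[R]_m) (C : set 'rV[R]_m)
  (w : nat -> 'rV[R]_n) wbar :
  eclosed C -> {for wbar, continuous G} -> accum_point w wbar ->
  (forall e, 0 < e -> exists2 d, 0 < d & exists N, forall j, (N <= j)%N ->
      `|w j - wbar| < d -> exists2 p, C p & `|G (w j) - p| < e) ->
  C (G wbar).
Proof.
move=> eC cG acc H; apply: eC => e e0.
have m0 : 0 < m.+1%:R :> R by [].
pose e' := e / m.+1%:R / 2.
have e'0 : 0 < e' by rewrite /e' !divr_gt0.
have [d1 d10 hd1] := cont_eps _ _ _ _ cG _ e'0.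
have [d d0 [N hN]] := H e' e'0.
have md : 0 < minr d d1 by rewrite lt_min d0 d10.
have [j Nj hj] := acc (minr d d1) md N.
have wn : `|w j - wbar| < minr d d1 := le_lt_trans (@norm_le_enorm n _) hj.
rewrite lt_min in wn; case/andP: wn => wd wd1.
have [p Cp hp] := hN j Nj wd.
exists p => //.
have hG : `|G wbar - G (w j)| < e' by apply: hd1; rewrite -normrN opprB.
have h3 : `|G wbar - p| < e / m.+1%:R.
  have -> : G wbar - p = (G wbar - G (w j)) + (G (w j) - p).
    by rewrite addrA subrK.
  apply: le_lt_trans (ler_normD _ _) _.
  have -> : e / m.+1%:R = e' + e' by rewrite /e' -splitr.
  exact: ltrD.
have h1 := @enorm_le m (G wbar - p).
have h2 : m.+1%:R * `|G wbar - p| < e by rewrite mulrC -ltr_pdivlMr.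
exact: le_lt_trans h1 h2.
Qed.

Lemma case_a (rho V : nat -> R) (beta eta M : R) :
  (forall k, 0 < rho k) -> 1 < beta -> 0 < eta < 1 -> (forall k, 0 <= V k) ->
  (forall k, rho k.+1 = rho k \/ rho k.+1 = beta * rho k) ->
  (forall k, rho k.+2 = if V k.+1 <= eta * V k then rho k.+1 else beta * rho k.+1) ->
  (forall k, rho k <= M) ->
  forall e, 0 < e -> exists K, forall k, (K <= k)%N -> V k < e.
Proof.
move=> rpos b1 /andP[eta0 eta1] V0 rstep rE rM e e0.
have rmono1 : forall k, rho k <= rho k.+1.
  move=> k; case: (rstep k) => ->; first by [].
  have := rpos k; nra.
have rmono : forall k j, rho k <= rho (k + j)%N.
  move=> k; elim=> [|j IH]; first by rewrite addn0.
  by rewrite addnS; apply: le_trans IH (rmono1 _).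
have [K HK] : exists K, forall k, (K <= k)%N -> rho k.+1 = rho k.
  case: (pselect (exists K, forall k, (K <= k)%N -> rho k.+1 = rho k)) => // nK.
  exfalso.
  have big : forall j, exists k, rho 0 * beta ^+ j <= rho k.
    elim=> [|j [k hk]]; first by exists 0%N; rewrite expr0 mulr1.
    have : ~ (forall k', (k <= k')%N -> rho k'.+1 = rho k') by move=> hh; apply: nK; exists k.
    move=> /existsNP [k' /not_implyP [kk' hne]].
    exists k'.+1.
    have hk' : rho k'.+1 = beta * rho k' by case: (rstep k') => // /hne.
    rewrite hk' exprS mulrCA.
    apply: ler_wpM2l; first by lra.
    apply: le_trans hk _.
    by have := rmono k (k' - k)%N; rewrite subnKC.
  have [j hj] := grow beta (rho 0%N) M b1 (rpos 0%N).
  have [k hk] := big j.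
  have := rM k; lra.
have Hdec : forall k, (K <= k)%N -> V k.+1 <= eta * V k.
  move=> k Kk; have := rE k; rewrite (HK k.+1 (leqW Kk)).
  case: ifP => // _ hb; have := rpos k.+1; nra.
have Hd : forall d, V (K + d)%N <= eta ^+ d * V K.
  elim=> [|d IH]; first by rewrite addn0 expr0 mul1r.
  rewrite addnS; apply: le_trans (Hdec _ (leq_addr _ _)) _.
  by rewrite exprS -mulrA; apply: ler_wpM2l; [lra|].
have qg : 1 < eta^-1 by rewrite invf_gt1.
have [j hj] := grow _ _ (V K) qg e0.
exists (K + j)%N => k Kk.
have -> : k = (K + (j + (k - K - j)))%N by lia.
apply: le_lt_trans (Hd _) _.
rewrite exprD -mulrA.
have ej : 0 < eta ^+ j by exact: exprn_gt0.
have hj2 : eta ^+ j * V K < e.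
  by rewrite exprVn in hj; rewrite mulrC -ltr_pdivlMr.
apply: le_lt_trans hj2.
apply: ler_wpM2l; first exact: ltW.
have x1 : eta ^+ (k - K - j) <= 1 by apply: exprn_ile1; lra.
have := V0 K; nra.
Qed.

End Aux.

Theorem mainTheorem7 (R : realType) (n m : nat)
  (f : 'rV[R]_n -> R) (G : 'rV[R]_n -> 'rV[R]_m)
  (C : set 'rV[R]_m) (D : set 'rV[R]_n)
  (rho0 beta eta : R) (U : set 'rV[R]_m)
  (w eps : nat -> 'rV[R]_n) (u : nat -> 'rV[R]_m) (rho : nat -> R) :
  C1r f -> C1 G ->
  C !=set0 -> eclosed C -> econvex C ->
  D !=set0 -> eclosed D ->
  0 < rho0 -> 1 < beta -> 0 < eta < 1 ->
  U !=set0 -> ebounded U ->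
  algorithm2 f G C D rho0 beta eta U w eps u rho ->
  forall wbar : 'rV[R]_n, accum_point w wbar ->
  (exists M : R, forall k, rho k <= M) \/
  (exists B : R, forall k, AugL f G C (rho k) (w k.+1) (u k) <= B) ->
  C (G wbar) /\ D wbar.
Proof.
move=> Cf CG C0 eC cC D0 eD rho0p b1 etab U0 bU alg wbar acc hyp.
case: alg => rho0E Dw0 Uu hgrad rhoE.
have Dw : forall k, D (w k).
  by case=> [|k] //; have [g _ [Dk _]] := hgrad k.
have Dwbar : D wbar.
  apply: eD => e e0; have [j _ hj] := acc e e0 0%N.
  by exists (w j) => //; rewrite (@enormB R n).
split => //.
have cG : {for wbar, continuous G} := differentiable_continuous (CG.1 wbar).
have rpos : forall k, 0 < rho k.
  elim => [|k IH]; first by rewrite rho0E.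
  rewrite rhoE; case: ifP => _ //; apply: mulr_gt0 IH; exact: lt_trans ltr01 b1.
have rstep : forall k, rho k.+1 = rho k \/ rho k.+1 = beta * rho k.
  by move=> k; rewrite rhoE; case: ifP => _; [left|right].
have rmono1 : forall k, rho k <= rho k.+1.
  move=> k; case: (rstep k) => ->; first by [].
  have := rpos k; nra.
have rmono : forall k j, (k <= j)%N -> rho k <= rho j.
  move=> k j /subnKC <-; elim: (j - k)%N => [|d IH]; first by rewrite addn0.
  by rewrite addnS; apply: le_trans IH (rmono1 _).
pose V := fun k => Vrho G C (rho k) (w k.+1) (u k).
have caseA : (exists M, forall k, rho k <= M) -> C (G wbar).
  move=> [M rM]; apply: (@closure_step R n m G C w wbar eC cG acc) => e e0.
  have V0 : forall k, 0 <= V k by move=> k; exact: (@enorm_ge0 R m).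
  have rE' : forall k, rho k.+2 = if V k.+1 <= eta * V k then rho k.+1 else beta * rho k.+1.
    by move=> k; rewrite [LHS]rhoE.
  have [K HK] := @case_a R rho V beta eta M rpos b1 etab V0 rstep rE' rM e e0.
  exists 1 => //; exists K.+1 => -[|k] // Kk _.
  exists (projC C (G (w k.+1) + (rho k)^-1 *: u k)); first exact: (@projC_in R m C _ C0 eC).
  apply: le_lt_trans (@norm_le_enorm R m _) _; exact: HK.
case: hyp => [hM|[B hB]]; first exact: caseA.
case: (pselect (exists M, forall k, rho k <= M)) => [hM|nM]; first exact: caseA.
apply: (@closure_step R n m G C w wbar eC cG acc) => e e0.
have cf : {for wbar, continuous f} := differentiable_continuous (Cf.1 wbar).
have [df df0 hf] := @cont_eps R _ _ f wbar cf 1 ltr01.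
have [MU hMU] := bU.
have MU0 : 0 <= MU by case: U0 => y Uy; exact: le_trans (@enorm_ge0 R m y) (hMU y Uy).
pose B' := B - f wbar + 1.
pose R0 := 1 + 8 * `|B'| / (e ^+ 2) + 2 * MU / e.
have [k0 hk0] : exists k0, R0 < rho k0.
  case: (pselect (exists k0, R0 < rho k0)) => // h; exfalso; apply: nM.
  by exists R0 => k; rewrite leNgt; apply/negP => hk; apply: h; exists k.
exists df => //; exists k0.+1 => -[|k] // kk hw.
have rk : R0 < rho k by have := rmono k0 k kk; lra.
pose z := G (w k.+1) + (rho k)^-1 *: u k.
pose p := projC C z.
exists p; first exact: (@projC_in R m C _ C0 eC).
have hfw : f wbar - 1 < f (w k.+1).
  have hw' : `|wbar - w k.+1| < df by rewrite -normrN opprB.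
  have := hf (w k.+1) hw'; rewrite ltr_norml; lra.
have hA := hB k; rewrite /AugL -/z in hA.
pose dC := distC C z.
have dC0 : 0 <= dC by exact: (@enorm_ge0 R m).
have hd : rho k / 2 * dC ^+ 2 < `|B'|.
  have : B' <= `|B'| by exact: ler_norm.
  rewrite /B'; rewrite -/dC in hA; lra.
have e20 : 0 < e ^+ 2 by exact: exprn_gt0.
have R0e : R0 * e ^+ 2 = e ^+ 2 + 8 * `|B'| + 2 * MU * e.
  by rewrite /R0; field; rewrite ?expf_neq0 // lt0r_neq0.
have R0e' : R0 * e = e + 8 * `|B'| / e + 2 * MU.
  by rewrite /R0; field; rewrite ?expf_neq0 // lt0r_neq0.
have B'0 : 0 <= 8 * `|B'| / e by apply: divr_ge0; [apply: mulr_ge0|exact: ltW].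
have rpk := rpos k.
have dCe : dC < e / 2.
  rewrite ltNge; apply/negP => hle.
  have h1 : e ^+ 2 / 4 <= dC ^+ 2.
    have -> : e ^+ 2 / 4 = (e / 2) ^+ 2 by rewrite expr_div_n; congr (_ / _); rewrite expr2; lra.
    by rewrite lerXn2r // nnegrE; lra.
  have h2 : rho k * (e ^+ 2 / 4) <= rho k * dC ^+ 2 by apply: ler_wpM2l; lra.
  have h3 : R0 * e ^+ 2 < rho k * e ^+ 2 by rewrite ltr_pM2r.
  have hMe : 0 <= 2 * MU * e by apply: mulr_ge0; lra.
  lra.
have ue : (rho k)^-1 * MU < e / 2.
  rewrite mulrC ltr_pdivrMr //.
  have h3 : R0 * e < rho k * e by rewrite ltr_pM2r.
  lra.
have -> : G (w k.+1) - p = (z - p) - (rho k)^-1 *: u k by rewrite /z addrAC addrK.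
apply: le_lt_trans (ler_normB _ _) _.
have hz : `|z - p| <= dC by exact: (@norm_le_enorm R m).
have hu : `|(rho k)^-1 *: u k| <= (rho k)^-1 * MU.
  rewrite normrZ ger0_norm; last by rewrite invr_ge0 ltW.
  apply: ler_wpM2l; first by rewrite invr_ge0 ltW.
  apply: le_trans (@norm_le_enorm R m _) _; exact: hMU.
lra.
Qed.
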